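(* A normal TDD is reduced if and only if none of the reduction rules RR1, RR2, RR3, RR4 is applicable to it.
   Context: Fix a finite index set $I$ with a linear order $\prec$. Indices take values in $\{0,1\}$; a tensor over $I$ is a map $\{0,1\}^I\to\mathbb{C}$ (tensors over subsets of $I$ are regarded as tensors over $I$ not depending on the other indices). Each index $x$ is regarded as the tensor $x(c)=c$, and $\overline{x}(c):=1-c$; operations on tensors are pointwise. A TDD over $I$ is $\mathcal F=(V,E,index,value,low,high,w)$: a rooted directed acyclic graph with finite node set $V$ partitioned into non-terminal nodes $V_N$ and terminal nodes $V_T$, root $r_{\mathcal F}$; $index:V_N\to I$; $value:V_T\to\mathbb{C}$; $low,high:V_N\to V$ (0- and 1-successors); edges are the low-edges $(v,low(v))$ and high-edges $(v,high(v))$, $v\in V_N$, plus a unique source-less incoming edge $e_r$ of the root; $w$ gives each edge a complex weight and $w_{\mathcal F}:=w(e_r)$. Node tensors: $\Phi(v)=value(v)$ for terminal $v$; otherwise $\Phi(v)=w_0\overline{x_v}\Phi(low(v))+w_1x_v\Phi(high(v))$ with $x_v=index(v)$ and $w_0,w_1$ the low-/high-edge weights. The TDD represents $\Phi(\mathcal F):=w_{\mathcal F}\Phi(r_{\mathcal F})$. Normality (w.r.t. $\prec$): the pivot of a tensor $\phi$ is the lexicographically smallest (compare at the $\prec$-smallest differing index, $0<1$) $\vec a$ with $|\phi(\vec a)|=\max_{\vec b}|\phi(\vec b)|$; $\phi$ is normal if $\phi=0$ or $\phi$ equals $1$ at its pivot. A TDD is normal if $\Phi(v)$ is normal for every node $v$.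 A TDD is reduced if it is normal and (1) $\Phi(v)\neq0$ for every node $v$; (2) all edges of weight $0$ point to the unique terminal node, which has value $1$; (3) $\Phi(u)\neq\Phi(v)$ for any two distinct nodes $u\neq v$. Reduction rules. RR1: merge all terminal nodes with value $1$; delete all terminal nodes with value $0$ (if any), redirect their incoming edges to the (unique) terminal node and reset the weights of these edges to $0$. RR2: redirect all weight-$0$ edges to the terminal node; if these include the incoming edge of the root, the terminal node becomes the new root; delete all nodes (and edges involving them) not reachable from the root. RR3: delete a node $v$ if its 0- and 1-successors are identical and its low- and high-edges have the same weight $w$ (either $0$ or $1$), redirecting its incoming edges to the terminal node with value $1$ if $w=0$ and otherwise to its successor. RR4: merge two nodes if they have the same index, the same 0- and 1-successors, and the same weights on the corresponding edges. *)

(* Defs.v *)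
From HB Require Import structures.
From mathcomp Require Import all_boot all_algebra.
From mathcomp Require Import reals complex.

Set Implicit Arguments.
Unset Strict Implicit.
Unset Printing Implicit Defensive.

Import GRing.Theory Num.Theory.
Local Open Scope ring_scope.

Section TDD.

Variable n : nat.
Variable C : numDomainType.
Variable V : finType.

(* Data attached to a node: a terminal node carries its value; a
   non-terminal node carries its index, its 0-successor (low), its
   1-successor (high), the weight of its low-edge and of its high-edge. *)
Inductive tnode :=
  | Term of C
  | Node of 'I_n & V & V & C & C.

Record tdd := TDD {
  root : V;
  root_w : C;
  kind : V -> tnode
}.

Variable F : tdd.

Definition succ : rel V := fun v u =>
  match kind F v with
  | Term _ => false
  | Node _ lo hi _ _ => (u == lo) || (u == hi)
  end.

Definition tdd_wf : Prop :=
  (forall v u, succ v u -> ~~ connect succ u v) /\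
  (forall v, connect succ (root F) v).

Definition ordered : Prop :=
  forall v x lo hi w0 w1, kind F v = Node x lo hi w0 w1 ->
  forall c, c \in [:: lo; hi] ->
    match kind F c with
    | Term _ => True
    | Node y _ _ _ _ => (x < y)%N
    end.

Definition assignment := {ffun 'I_n -> bool}.
Definition tensor := {ffun assignment -> C}.

(* Node tensors, by structural recursion with fuel; on an acyclic graph
   with #|V| nodes every path has at most #|V| nodes, so fuel #|V| computes
   Phi(v) = w0 * (1 - x_v) * Phi(low v) + w1 * x_v * Phi(high v),
   Phi(terminal) = value. *)
Fixpoint phi_fuel (k : nat) (v : V) : tensor :=
  match k with
  | 0 => [ffun _ => 0]
  | k'.+1 =>
    match kind F v with
    | Term c => [ffun _ => c]
    | Node x lo hi w0 w1 =>
        [ffun a : assignment =>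
           w0 * (1 - (a x)%:R) * phi_fuel k' lo a
         + w1 * (a x)%:R * phi_fuel k' hi a]
    end
  end.

Definition Phi (v : V) : tensor := phi_fuel #|V| v.

End TDD.

Section Normal.

Variable n : nat.
Variable C : numDomainType.

Definition lex_lt (a b : assignment n) : Prop :=
  exists i : 'I_n, (forall j : 'I_n, (j < i)%N -> a j = b j) /\
                   a i = false /\ b i = true.

Definition is_pivot (phi : tensor n C) (a : assignment n) : Prop :=
  (forall b, `|phi b| <= `|phi a|) /\
  (forall b, `|phi b| = `|phi a| -> a = b \/ lex_lt a b).

Definition normal_tensor (phi : tensor n C) : Prop :=
  phi = [ffun _ => 0] \/ exists a, is_pivot phi a /\ phi a = 1.

Variable V : finType.
Variable F : tdd n C V.

Definition normal_tdd : Prop := forall v, normal_tensor (Phi F v).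

Definition zero_edges_to (t : V) : Prop :=
  (root_w F = 0 -> root F = t) /\
  (forall v x lo hi w0 w1, kind F v = Node x lo hi w0 w1 ->
     (w0 = 0 -> lo = t) /\ (w1 = 0 -> hi = t)).

Definition reduced : Prop :=
  normal_tdd /\
  (forall v, Phi F v <> [ffun _ => 0]) /\
  (exists t, kind F t = Term _ _ 1 /\
             (forall u c, kind F u = Term _ _ c -> u = t) /\
             zero_edges_to t) /\
  (forall u v, u <> v -> Phi F u <> Phi F v).

(* Applicability of the reduction rules: the rule has an instance that
   actually changes the diagram. *)
Definition RR1_applicable : Prop :=
  (exists t, kind F t = Term _ _ 0) \/
  (exists t1 t2, t1 <> t2 /\ kind F t1 = Term _ _ 1 /\ kind F t2 = Term _ _ 1).

Definition RR2_applicable : Prop :=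
  (root_w F = 0 /\ kind F (root F) <> Term _ _ 1) \/
  (exists v x lo hi w0 w1, kind F v = Node x lo hi w0 w1 /\
     ((w0 = 0 /\ kind F lo <> Term _ _ 1) \/
      (w1 = 0 /\ kind F hi <> Term _ _ 1))).

Definition RR3_applicable : Prop :=
  exists v x u w, kind F v = Node x u u w w /\ (w = 0 \/ w = 1).

Definition RR4_applicable : Prop :=
  exists u v x lo hi w0 w1, u <> v /\
    kind F u = Node x lo hi w0 w1 /\ kind F v = Node x lo hi w0 w1.

End Normal.

(* Main.v *)
Require Import Defs.
From HB Require Import structures.
From mathcomp Require Import all_boot all_algebra.
From mathcomp Require Import reals complex.
From mathcomp Require Import order.
Import Order.TTheory GRing.Theory Num.Theory.
Local Open Scope ring_scope.




Definition dep {n} {C : numDomainType} {V : finType} (F : tdd n C V) (v : V) :=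
  #|[set u | connect (succ F) v u]|.

Definition acyc {n} {C : numDomainType} {V : finType} (F : tdd n C V) :=
  forall v u, succ F v u -> ~~ connect (succ F) u v.

Lemma dep_gt0 {n} {C : numDomainType} {V : finType} (F : tdd n C V) v :
  (0 < dep F v)%N.
Proof. by apply/card_gt0P; exists v; rewrite inE connect0. Qed.

Lemma dep_le {n} {C : numDomainType} {V : finType} (F : tdd n C V) v :
  (dep F v <= #|V|)%N.
Proof. exact: max_card. Qed.

Lemma dep_succ {n} {C : numDomainType} {V : finType} {F : tdd n C V} {v u} :
  acyc F -> succ F v u -> (dep F u < dep F v)%N.
Proof.
move=> ac s; apply: proper_card; apply/properP; split.
  apply/subsetP => z; rewrite !inE => h; exact: connect_trans (connect1 s) h.
exists v; first by rewrite inE connect0.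
by rewrite inE; apply: ac.
Qed.

Lemma phi_stab {n} {C : numDomainType} {V : finType} {F : tdd n C V} :
  acyc F -> forall k1 k2 v, (dep F v <= k1)%N -> (dep F v <= k2)%N ->
  phi_fuel F k1 v = phi_fuel F k2 v.
Proof.
move=> ac; elim=> [|k1 IH] k2 v h1 h2.
  by move: (dep_gt0 F v); rewrite leqNgt; move: h1; rewrite leqn0 => /eqP ->.
case: k2 h2 => [|k2] h2.
  by move: (dep_gt0 F v); move: h2; rewrite leqn0 => /eqP ->.
rewrite /=; case E: (kind F v) => [c|x lo hi w0 w1] //.
have slo : succ F v lo by rewrite /succ E eqxx.
have shi : succ F v hi by rewrite /succ E eqxx orbT.
have dl := dep_succ ac slo; have dh := dep_succ ac shi.
rewrite (IH k2 lo) ?(IH k2 hi) //.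
- by rewrite -ltnS (leq_trans dh).
- by rewrite -ltnS (leq_trans dh).
- by rewrite -ltnS (leq_trans dl).
- by rewrite -ltnS (leq_trans dl).
Qed.

Lemma Phi_node {n} {C : numDomainType} {V : finType} {F : tdd n C V} {v x lo hi w0 w1} :
  acyc F -> kind F v = Node x lo hi w0 w1 ->
  Phi F v = [ffun a : assignment n => w0 * (1 - (a x)%:R) * Phi F lo a
                                    + w1 * (a x)%:R * Phi F hi a].
Proof.
move=> ac E; rewrite /Phi.
have slo : succ F v lo by rewrite /succ E eqxx.
have shi : succ F v hi by rewrite /succ E eqxx orbT.
have dl := dep_succ ac slo; have dh := dep_succ ac shi.
have dv := dep_le F v.
case N: #|V| dv => [|k] dv.
  by move: (dep_gt0 F v); rewrite leqNgt; move: dv; rewrite leqn0 => /eqP ->.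
rewrite /= E (phi_stab ac k k.+1 lo) ?(phi_stab ac k k.+1 hi) //.
- by rewrite -ltnS (leq_trans dh).
- by apply: ltnW; rewrite (leq_trans dh).
- by rewrite -ltnS (leq_trans dl).
- by apply: ltnW; rewrite (leq_trans dl).
Qed.

Lemma Phi_term {n} {C : numDomainType} {V : finType} {F : tdd n C V} {v c} :
  kind F v = Term n V c -> Phi F v = [ffun _ => c].
Proof.
move=> E; rewrite /Phi.
have : (0 < #|V|)%N by apply/card_gt0P; exists v.
by case: #|V| => [|k] //= _; rewrite E.
Qed.

Definition upd {n} (a : assignment n) (i : 'I_n) (b : bool) : assignment n :=
  [ffun j => if j == i then b else a j].

Definition above {n} {C : numDomainType} {V : finType} (F : tdd n C V) v (i : 'I_n) : Prop :=
  match kind F v with Term _ => True | Node y _ _ _ _ => (i < y)%N end.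

Lemma indep {n} {C : numDomainType} {V : finType} {F : tdd n C V} :
  acyc F -> ordered F -> forall v i (a b : assignment n), above F v i ->
  (forall j, j != i -> a j = b j) -> Phi F v a = Phi F v b.
Proof.
move=> ac ord.
suff H : forall k v, (dep F v <= k)%N -> forall i (a b : assignment n), above F v i ->
  (forall j, j != i -> a j = b j) -> Phi F v a = Phi F v b.
  by move=> v; apply: (H _ v (leqnn _)).
elim=> [|k IH] v hv i a b.
  by move: (dep_gt0 F v); move: hv; rewrite leqn0 => /eqP ->.
rewrite /above; case E: (kind F v) => [c|y lo hi w0 w1] Ha Hab.
  by rewrite (Phi_term E) !ffunE.
have slo : succ F v lo by rewrite /succ E eqxx.
have shi : succ F v hi by rewrite /succ E eqxx orbT.
have dl := dep_succ ac slo; have dh := dep_succ ac shi.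
have yi : y != i by apply/eqP => e; rewrite e ltnn in Ha.
have ab : forall c, c \in [:: lo; hi] -> above F c i.
  move=> c cin; have := ord v y lo hi w0 w1 E c cin.
  by rewrite /above; case: (kind F c) => // z _ _ _ _ yz; exact: ltn_trans Ha yz.
rewrite (Phi_node ac E) !ffunE (Hab y yi).
rewrite (IH lo _ i a b) ?(IH hi _ i a b) ?ab ?inE ?eqxx ?orbT //.
all: try by rewrite -ltnS (leq_trans _ hv).
all: by apply: ab; rewrite !inE eqxx ?orbT.
Qed.

Lemma Phi_node0 {n} {C : numDomainType} {V : finType} {F : tdd n C V} {v x lo hi w0 w1} :
  acyc F -> ordered F -> kind F v = Node x lo hi w0 w1 ->
  forall a, Phi F v (upd a x false) = w0 * Phi F lo a.
Proof.
move=> ac ord E a; rewrite (Phi_node ac E) ffunE /upd ffunE eqxx /=.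
rewrite subr0 mulr1 mulr0 mul0r addr0; congr (_ * _).
apply: (indep ac ord _ x).
  have := ord v x lo hi w0 w1 E lo (mem_head _ _).
  by rewrite /above; case: (kind F lo).
by move=> j /negbTE jx; rewrite ffunE jx.
Qed.

Lemma Phi_node1 {n} {C : numDomainType} {V : finType} {F : tdd n C V} {v x lo hi w0 w1} :
  acyc F -> ordered F -> kind F v = Node x lo hi w0 w1 ->
  forall a, Phi F v (upd a x true) = w1 * Phi F hi a.
Proof.
move=> ac ord E a; rewrite (Phi_node ac E) ffunE /upd ffunE eqxx /=.
rewrite subrr mulr0 mul0r add0r mulr1; congr (_ * _).
apply: (indep ac ord _ x).
  have := ord v x lo hi w0 w1 E hi; rewrite !inE eqxx orbT => /(_ isT).
  by rewrite /above; case: (kind F hi).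
by move=> j /negbTE jx; rewrite ffunE jx.
Qed.

Lemma lex_asym {n} (a b : assignment n) : lex_lt a b -> lex_lt b a -> False.
Proof.
case=> i [Hi [ai bi]] [j [Hj [bj aj]]].
case: (ltngtP i j) => h.
- by have := Hj i h; rewrite ai bi.
- by have := Hi j h; rewrite aj bj.
- have ij : i = j by apply: val_inj.
  by subst; rewrite ai in aj.
Qed.

Lemma pivot_scale {n} {C : numDomainType} {phi psi : tensor n C} {c a b} :
  (forall z, phi z = c * psi z) -> c != 0 -> is_pivot phi a -> is_pivot psi b -> a = b.
Proof.
move=> H c0 [pa1 pa2] [pb1 pb2].
have cp : 0 < `|c| by rewrite normr_gt0.
have e z : `|phi z| = `|c| * `|psi z| by rewrite H normrM.
have h1 : `|psi b| <= `|psi a| by rewrite -(ler_pM2l cp) -!e; exact: pa1.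
have h2 := pb1 a.
have eq1 : `|psi a| = `|psi b| by apply/eqP; rewrite eq_le h2 h1.
have eq2 : `|phi b| = `|phi a| by rewrite !e eq1.
case: (pa2 b eq2) => // lab; case: (pb2 a eq1) => [->|lba] //.
by exfalso; exact: lex_asym lab lba.
Qed.

Lemma nz_ex {n} {C : numDomainType} {phi : tensor n C} :
  phi <> [ffun _ => 0] -> exists a, phi a != 0.
Proof.
move=> Hp; case: (pickP (fun a => phi a != 0)) => [a Ha|H]; first by exists a.
exfalso; apply: Hp; apply/ffunP=> a; rewrite ffunE.
by move/negbFE: (H a) => /eqP.
Qed.

Lemma scale_normal {n} {C : numFieldType} (phi psi : tensor n C) w w' :
  normal_tensor phi -> normal_tensor psi ->
  phi <> [ffun _ => 0] -> psi <> [ffun _ => 0] ->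
  (forall a, w * phi a = w' * psi a) -> w = w' /\ (w = 0 \/ phi = psi).
Proof.
move=> Nphi Npsi nz1 nz2 H.
have [b hb] := nz_ex nz2; have [a0 ha0] := nz_ex nz1.
case: (eqVneq w 0) => [w0|wn0].
  have : w' * psi b = 0 by rewrite -H w0 mul0r.
  move/eqP; rewrite mulf_eq0 (negbTE hb) orbF => /eqP w'0.
  by split; [rewrite w0 w'0|left].
have w'n0 : w' != 0.
  apply/eqP => w'0; have : w * phi a0 = 0 by rewrite H w'0 mul0r.
  by move/eqP; rewrite mulf_eq0 (negbTE wn0) (negbTE ha0).
pose c := w' / w.
have Hc z : phi z = c * psi z.
  by rewrite /c mulrAC -H [w * _]mulrC mulfK.
have c0 : c != 0 by rewrite /c mulf_neq0 ?invr_neq0.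
case: Nphi => [//|[a [pa a1]]]; case: Npsi => [//|[b' [pb b1]]].
have ab := pivot_scale Hc c0 pa pb; subst b'.
have c1 : c = 1 by rewrite -a1 Hc b1 mulr1.
have ww : w' = w by rewrite -[w'](divfK wn0) -/c c1 mul1r.
split; first by [].
by right; apply/ffunP => z; rewrite Hc c1 mul1r.
Qed.

Lemma const_eq {n} {C : numDomainType} (c d : C) :
  [ffun _ : assignment n => c] = [ffun _ => d] -> c = d.
Proof. by move/ffunP => /(_ [ffun _ => false]); rewrite !ffunE. Qed.

Lemma normal_const {n} {C : numDomainType} (c : C) :
  normal_tensor [ffun _ : assignment n => c] -> c = 0 \/ c = 1.
Proof.
case=> [H|[a [_ H]]].
  by left; apply: const_eq H.
by right; rewrite ffunE in H.
Qed.

Theorem theorem4 (R : realType) (n : nat) (V : finType)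
    (F : tdd n (complex R) V) :
  tdd_wf F -> ordered F -> normal_tdd F ->
  (reduced F <->
   (~ RR1_applicable F /\ ~ RR2_applicable F /\
    ~ RR3_applicable F /\ ~ RR4_applicable F)).
Proof.
move=> [ac _] ord Hnorm; split.
  move=> [_ [Hnz [[t [Ht [Huniq Hz]]] Hinj]]].
  split; [|split; [|split]].
  - case=> [[t0 E]|[t1 [t2 [ne [E1 E2]]]]].
      by apply: (Hnz t0); rewrite (Phi_term E).
    by apply: ne; rewrite (Huniq _ _ E1) (Huniq _ _ E2).
  - case=> [[rw0 Hk]|[v [x [lo [hi [w0 [w1 [E [[h0 Hk]|[h1 Hk]]]]]]]]]].
    + by apply: Hk; rewrite (Hz.1 rw0) Ht.
    + by apply: Hk; rewrite ((Hz.2 _ _ _ _ _ _ E).1 h0) Ht.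
    + by apply: Hk; rewrite ((Hz.2 _ _ _ _ _ _ E).2 h1) Ht.
  - case=> v [x [u [w [E [w0|w1]]]]].
      subst w; apply: (Hnz v); rewrite (Phi_node ac E).
      by apply/ffunP => a; rewrite !ffunE !mul0r addr0.
    subst w.
    have s : succ F v u by rewrite /succ E eqxx.
    apply: (Hinj v u).
      by move=> e; subst u; move: (ac _ _ s); rewrite connect0.
    rewrite (Phi_node ac E); apply/ffunP => a.
    by rewrite ffunE !mul1r -mulrDl subrK mul1r.
  - case=> u [v [x [lo [hi [w0 [w1 [ne [Eu Ev]]]]]]]].
    by apply: (Hinj u v ne); rewrite (Phi_node ac Eu) (Phi_node ac Ev).
move=> [n1 [n2 [n3 n4]]].
have Tval : forall t c, kind F t = Term n V c -> c = 1.
  move=> t c E; have := Hnorm t; rewrite (Phi_term E) => /normal_const [c0|//].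
  by exfalso; apply: n1; left; exists t; rewrite E c0.
have Tuniq : forall t1 t2 c1 c2, kind F t1 = Term n V c1 -> kind F t2 = Term n V c2 -> t1 = t2.
  move=> t1 t2 c1 c2 E1 E2; case: (eqVneq t1 t2) => // ne.
  exfalso; apply: n1; right; exists t1, t2; split; first by apply/eqP.
  by rewrite E1 E2 (Tval _ _ E1) (Tval _ _ E2).
have Texists : forall k v, (dep F v <= k)%N -> exists t c, kind F t = Term n V c.
  elim=> [|k IH] v hv.
    by move: (dep_gt0 F v); move: hv; rewrite leqn0 => /eqP ->.
  case E: (kind F v) => [c|x lo hi w0 w1]; first by exists v, c.
  have slo : succ F v lo by rewrite /succ E eqxx.
  apply: (IH lo); rewrite -ltnS; exact: leq_trans (dep_succ ac slo) hv.
have [t [c Ht0]] := Texists _ (Defs.root F) (leqnn _).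
have Ht : kind F t = Term n V 1 by rewrite Ht0 (Tval _ _ Ht0).
have K1 : forall u, (kind F u <> Term n V 1 -> False) -> u = t.
  move=> u; case E: (kind F u) => [c'|x lo hi w0 w1] H.
    exact: Tuniq E Ht.
  by exfalso; apply: H.
have Hnz : forall k v, (dep F v <= k)%N -> Phi F v <> [ffun _ => 0].
  elim=> [|k IH] v hv.
    by move: (dep_gt0 F v); move: hv; rewrite leqn0 => /eqP ->.
  case E: (kind F v) => [c'|x lo hi w0 w1].
    rewrite (Phi_term E) (Tval _ _ E) => H.
    by move/const_eq/eqP: H; rewrite oner_eq0.
  have slo : succ F v lo by rewrite /succ E eqxx.
  have shi : succ F v hi by rewrite /succ E eqxx orbT.
  have nl : Phi F lo <> [ffun _ => 0].
    by apply: IH; rewrite -ltnS; exact: leq_trans (dep_succ ac slo) hv.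
  have nh : Phi F hi <> [ffun _ => 0].
    by apply: IH; rewrite -ltnS; exact: leq_trans (dep_succ ac shi) hv.
  move=> P0.
  have [a ha] := nz_ex nl; have [b hb] := nz_ex nh.
  have h0 : w0 = 0.
    have := Phi_node0 ac ord E a; rewrite P0 ffunE => /esym/eqP.
    by rewrite mulf_eq0 (negbTE ha) orbF => /eqP.
  have h1 : w1 = 0.
    have := Phi_node1 ac ord E b; rewrite P0 ffunE => /esym/eqP.
    by rewrite mulf_eq0 (negbTE hb) orbF => /eqP.
  have lt : lo = t.
    by apply: K1 => Hk; apply: n2; right; exists v, x, lo, hi, w0, w1; split => //; left.
  have ht : hi = t.
    by apply: K1 => Hk; apply: n2; right; exists v, x, lo, hi, w0, w1; split => //; right.
  apply: n3; exists v, x, t, 0; split; last by left.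
  by rewrite E lt ht h0 h1.
have Hnz' : forall v, Phi F v <> [ffun _ => 0] := fun v => Hnz _ v (leqnn _).
have Hinj : forall k u v, (dep F u + dep F v <= k)%N -> Phi F u = Phi F v -> u = v.
  elim=> [|k IH] u v huv Puv.
    by move: (dep_gt0 F u) huv; rewrite leqn0 addn_eq0 => /prednK <-.
  have key : forall u' v' x lo hi w0 w1, kind F u' = Node x lo hi w0 w1 ->
      above F v' x -> (dep F u' + dep F v' <= k.+1)%N -> Phi F u' = Phi F v' -> False.
    move=> u' v' x lo hi w0 w1 E ab hd P.
    have slo : succ F u' lo by rewrite /succ E eqxx.
    have shi : succ F u' hi by rewrite /succ E eqxx orbT.
    have dl := dep_succ ac slo; have dh := dep_succ ac shi.
    have eqv : forall b a, Phi F v' (upd a x b) = Phi F v' a.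
      move=> b0 a; apply: (indep ac ord v' x _ _ ab) => j /negbTE jx.
      by rewrite /upd ffunE jx.
    have [e0 s0] : w0 = 1 /\ (w0 = 0 \/ Phi F lo = Phi F v').
      move: (@scale_normal n (complex R) (Phi F lo) (Phi F v') w0 1 (Hnorm lo) (Hnorm v') (Hnz' lo) (Hnz' v')); apply => a.
      by rewrite mul1r -(Phi_node0 ac ord E) P eqv.
    have [e1 s1] : w1 = 1 /\ (w1 = 0 \/ Phi F hi = Phi F v').
      move: (@scale_normal n (complex R) (Phi F hi) (Phi F v') w1 1 (Hnorm hi) (Hnorm v') (Hnz' hi) (Hnz' v')); apply => a.
      by rewrite mul1r -(Phi_node1 ac ord E) P eqv.
    have lv : lo = v'.
      case: s0 => [w00|]; first by move: (@oner_neq0 (complex R)); rewrite -e0 w00 eqxx.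
      apply: IH; rewrite -ltnS; apply: leq_trans hd; by rewrite ltn_add2r.
    have hv : hi = v'.
      case: s1 => [w10|]; first by move: (@oner_neq0 (complex R)); rewrite -e1 w10 eqxx.
      apply: IH; rewrite -ltnS; apply: leq_trans hd; by rewrite ltn_add2r.
    apply: n3; exists u', x, v', 1; split; last by right.
    by rewrite E lv hv e0 e1.
  case: (eqVneq u v) => // ne; exfalso.
  case Eu: (kind F u) => [cu|x lo hi w0 w1]; case Ev: (kind F v) => [cv|y lo' hi' w0' w1'].
  - by move/eqP: ne; apply; apply: Tuniq Eu Ev.
  - apply: (key v u y lo' hi' w0' w1' Ev _ _ (esym Puv)); first by rewrite /above Eu.
    by rewrite addnC.
  - by apply: (key u v x lo hi w0 w1 Eu _ huv Puv); rewrite /above Ev.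
  - case: (ltngtP x y) => hxy.
    + by apply: (key u v x lo hi w0 w1 Eu _ huv Puv); rewrite /above Ev.
    + apply: (key v u y lo' hi' w0' w1' Ev _ _ (esym Puv)); first by rewrite /above Eu.
      by rewrite addnC.
    + have xy : x = y by apply: val_inj.
      subst y.
      have slo : succ F u lo by rewrite /succ Eu eqxx.
      have shi : succ F u hi by rewrite /succ Eu eqxx orbT.
      have slo' : succ F v lo' by rewrite /succ Ev eqxx.
      have shi' : succ F v hi' by rewrite /succ Ev eqxx orbT.
      have [e0 s0] : w0 = w0' /\ (w0 = 0 \/ Phi F lo = Phi F lo').
        move: (@scale_normal n (complex R) (Phi F lo) (Phi F lo') w0 w0' (Hnorm lo) (Hnorm lo') (Hnz' lo) (Hnz' lo')); apply => a.
        by rewrite -(Phi_node0 ac ord Eu) -(Phi_node0 ac ord Ev) Puv.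
      have [e1 s1] : w1 = w1' /\ (w1 = 0 \/ Phi F hi = Phi F hi').
        move: (@scale_normal n (complex R) (Phi F hi) (Phi F hi') w1 w1' (Hnorm hi) (Hnorm hi') (Hnz' hi) (Hnz' hi')); apply => a.
        by rewrite -(Phi_node1 ac ord Eu) -(Phi_node1 ac ord Ev) Puv.
      have ll : lo = lo'.
        case: s0 => [w00|].
          have L1 : lo = t.
            apply: K1 => Hk; apply: n2; right; exists u, x, lo, hi, w0, w1; split; first exact: Eu.
            by left; split.
          have L2 : lo' = t.
            apply: K1 => Hk; apply: n2; right; exists v, x, lo', hi', w0', w1'; split; first exact: Ev.
            by left; split; first by rewrite -e0.
          by rewrite L1 L2.
        apply: IH; rewrite -ltnS; apply: leq_trans huv.
        rewrite -addSn; apply: leq_add; [exact: dep_succ ac slo | exact: ltnW (dep_succ ac slo')].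
      have hh : hi = hi'.
        case: s1 => [w10|].
          have L1 : hi = t.
            apply: K1 => Hk; apply: n2; right; exists u, x, lo, hi, w0, w1; split; first exact: Eu.
            by right; split.
          have L2 : hi' = t.
            apply: K1 => Hk; apply: n2; right; exists v, x, lo', hi', w0', w1'; split; first exact: Ev.
            by right; split; first by rewrite -e1.
          by rewrite L1 L2.
        apply: IH; rewrite -ltnS; apply: leq_trans huv.
        rewrite -addSn; apply: leq_add; [exact: dep_succ ac shi | exact: ltnW (dep_succ ac shi')].
      apply: n4; exists u, v, x, lo, hi, w0, w1; split; first by apply/eqP.
      by split => //; rewrite Ev -ll -hh -e0 -e1.
split => //; split; first exact: Hnz'.
split.
  exists t; split => //; split.
    by move=> u c' E; exact: Tuniq E Ht.
  split.
    move=> rw0; apply: K1 => Hk; apply: n2; left; by split.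
  move=> v x lo hi w0 w1 E; split => h.
    by apply: K1 => Hk; apply: n2; right; exists v, x, lo, hi, w0, w1; split => //; left.
  by apply: K1 => Hk; apply: n2; right; exists v, x, lo, hi, w0, w1; split => //; right.
move=> u v ne P; apply: ne; exact: (Hinj _ u v (leqnn _) P).
Qed.
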